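(* Let $X$ be a topological space such that the diagonal $\Delta X=\{(x,x):x\in X\}$ is statistically closed in $X\times X$. Then every statistically compact subspace of $X$ is statistically closed in $X$.
   Context: For $A\subseteq\mathbb{N}$ let $d_n(A)=|A\cap\{1,\dots,n\}|/n$, $\overline{d}(A)=\limsup_n d_n(A)$, $\underline{d}(A)=\liminf_n d_n(A)$, and $d(A)$ their common value when equal. A sequence in $X$ is a map from an infinite subset $M\subseteq\mathbb{N}$ into $X$, written $(x_n)_{n\in M}$; a subsequence is $(x_n)_{n\in N}$ with $N\subseteq M$ infinite. It is nonthin if $\overline{d}(M)>0$. A nonthin sequence $(x_n)_{n\in M}$ is statistically convergent to $a\in X$ if for every open $U\ni a$, $d(\{n\in M:x_n\notin U\})=0$. The statistical closure $\overline{F}^{ST}$ of $F\subseteq X$ is the set of $x\in X$ such that some nonthin sequence in $F$ is statistically convergent to $x$; $F$ is statistically closed if $\overline{F}^{ST}=F$. A topological space is statistically compact if every nonthin sequence in it has a nonthin subsequence that is statistically convergent to some point of the space; a subset is statistically compact if it is so in the subspace topology. *)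

(* Defs.v *)
From HB Require Import structures.
From mathcomp Require Import all_boot all_order all_algebra.
From mathcomp Require Import all_classical all_reals all_analysis.
From mathcomp Require Import Rstruct Rstruct_topology.
Set Implicit Arguments. Unset Strict Implicit. Unset Printing Implicit Defensive.
Import Order.TTheory GRing.Theory Num.Theory.
Local Open Scope classical_set_scope.
Local Open Scope ring_scope.

(* d_n(A) = |A ∩ {1,...,n}| / n  (for n = 0 the value is 0 and irrelevant) *)
Definition dens_n (A : set nat) (n : nat) : Rdefinitions.R :=
  (\sum_(1 <= k < n.+1) (if `[< A k >] then 1%N else 0%N))%:R / n%:R.

Definition upper_density (A : set nat) : Rdefinitions.R := limn_sup (dens_n A).
Definition lower_density (A : set nat) : Rdefinitions.R := limn_inf (dens_n A).

Definition has_density (A : set nat) (r : Rdefinitions.R) : Prop :=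
  upper_density A = r /\ lower_density A = r.

(* A sequence (x_n)_{n in M}: M an infinite subset of N = {1,2,...}; x is only
   relevant on M. *)
Definition is_seq_dom (M : set nat) : Prop :=
  infinite_set M /\ M `<=` [set n | (0 < n)%N].

Definition nonthin (M : set nat) : Prop :=
  is_seq_dom M /\ 0 < upper_density M.

Definition seq_in {T : Type} (F : set T) (M : set nat) (x : nat -> T) : Prop :=
  forall n, M n -> F (x n).

Definition stat_conv {T : topologicalType} (M : set nat) (x : nat -> T) (a : T)
  : Prop :=
  nonthin M /\
  forall U : set T, open U -> U a -> has_density [set n | M n /\ ~ U (x n)] 0.

Definition stat_closure {T : topologicalType} (F : set T) : set T :=
  [set a | exists (M : set nat) (x : nat -> T),
             nonthin M /\ seq_in F M x /\ stat_conv M x a].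

Definition stat_closed {T : topologicalType} (F : set T) : Prop :=
  stat_closure F = F.

Definition stat_compact_space (T : topologicalType) : Prop :=
  forall (M : set nat) (x : nat -> T), nonthin M ->
    exists N : set nat, N `<=` M /\ nonthin N /\
      exists a : T, stat_conv N x a.

Definition stat_compact_set {T : topologicalType} (K : set T) : Prop :=
  forall (M : set nat) (x : nat -> subspace K), nonthin M -> seq_in K M x ->
    exists N : set nat, N `<=` M /\ nonthin N /\
      exists a : subspace K, K a /\ stat_conv N x a.

Definition diag_set (T : Type) : set (T * T) := [set p | p.1 = p.2].
Arguments diag_set : clear implicits.

(* Main.v *)
Require Import Defs.
From mathcomp Require Import all_boot all_order all_algebra.
From mathcomp Require Import all_classical all_reals all_analysis.
Local Open Scope classical_set_scope.
From HB Require Import structures.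
From mathcomp Require Import all_boot all_order all_algebra.
From mathcomp Require Import all_classical all_reals all_analysis.
From mathcomp Require Import Rstruct Rstruct_topology.
Import Order.TTheory GRing.Theory Num.Theory.
Local Open Scope classical_set_scope.
Local Open Scope ring_scope.
Set Implicit Arguments. Unset Strict Implicit.

Definition cnt (A : set nat) n := (\sum_(1 <= k < n.+1) (if `[< A k >] then 1%N else 0%N))%N.

Lemma cnt_mono A B n : A `<=` B -> (cnt A n <= cnt B n)%N.
Proof.
move=> AB; apply: leq_sum => k _.
case: asboolP => // /AB Bk; case: asboolP => //.
Qed.

Lemma cnt_union A B n : (cnt (A `|` B) n <= cnt A n + cnt B n)%N.
Proof.
rewrite /cnt -big_split /=; apply: leq_sum => k _.
case: asboolP => // -[Ak|Bk]; case: asboolP => //; case: asboolP => //.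
Qed.

Lemma cnt_le A n : (cnt A n <= n)%N.
Proof.
apply: (@leq_trans (\sum_(1 <= k < n.+1) 1)%N).
  by apply: leq_sum => k _; case: asboolP.
by rewrite sum_nat_const_nat subn1 muln1.
Qed.

Lemma densE A n : dens_n A n = (cnt A n)%:R / n%:R.
Proof. by []. Qed.

Lemma dens_ge0 A n : 0 <= dens_n A n.
Proof. by rewrite densE divr_ge0. Qed.

Lemma dens_le1 A n : dens_n A n <= 1.
Proof.
rewrite densE; case: n => [|n]; first by rewrite invr0 mulr0.
rewrite ler_pdivrMr ?ltr0n // mul1r ler_nat; exact: cnt_le.
Qed.

Lemma dens_mono A B n : A `<=` B -> dens_n A n <= dens_n B n.
Proof.
move=> AB; rewrite !densE ler_wpM2r ?invr_ge0 // ler_nat; exact: cnt_mono.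
Qed.

Lemma dens_union A B n : dens_n (A `|` B) n <= dens_n A n + dens_n B n.
Proof.
rewrite !densE -mulrDl -natrD ler_wpM2r ?invr_ge0 // ler_nat; exact: cnt_union.
Qed.

Lemma dens_ub A : has_ubound (range (dens_n A)).
Proof. by exists 1 => _ [n _ <-]; exact: dens_le1. Qed.
Lemma dens_lb A : has_lbound (range (dens_n A)).
Proof. by exists 0 => _ [n _ <-]; exact: dens_ge0. Qed.

Lemma dens0_cvg A : has_density A 0 -> dens_n A @ \oo --> (0 : Rdefinitions.R).
Proof.
move=> [hs _].
have cs := cvg_sups_inf (dens_ub A) (dens_lb A).
have : limn_sup (dens_n A) = inf (range (sups (dens_n A))) by apply: cvg_lim.
rewrite -/(upper_density A) hs => e0; rewrite -e0 in cs.
apply: (squeeze_cvgr _ (cvg_cst (0:Rdefinitions.R)) cs).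
apply: nearW => n; rewrite dens_ge0 /=.
apply: ub_le_sup; last by exists n => /=.
exact: has_ubound_sdrop (dens_ub A) n.
Qed.

Lemma cvg_dens0 A : dens_n A @ \oo --> (0 : Rdefinitions.R) -> has_density A 0.
Proof. by move=> h; have [a b] := cvg_limn_inf_sup h; split. Qed.

Lemma dens0_sub A B : A `<=` B -> has_density B 0 -> has_density A 0.
Proof.
move=> AB /dens0_cvg hB; apply: cvg_dens0.
apply: (squeeze_cvgr _ (cvg_cst (0:Rdefinitions.R)) hB).
by apply: nearW => n; rewrite dens_ge0 dens_mono.
Qed.

Lemma dens0_union A B : has_density A 0 -> has_density B 0 -> has_density (A `|` B) 0.
Proof.
move=> /dens0_cvg hA /dens0_cvg hB; apply: cvg_dens0.
have hAB : (fun n => dens_n A n + dens_n B n) @ \oo --> (0:Rdefinitions.R) + 0.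
  exact: (@cvgD _ (Rdefinitions.R^o) _ _ _ (dens_n A) (dens_n B) 0 0 hA hB).
rewrite addr0 in hAB.
apply: (squeeze_cvgr _ (cvg_cst (0:Rdefinitions.R)) hAB).
by apply: nearW => n; rewrite dens_ge0 dens_union.
Qed.

Lemma stat_conv_sub (T : topologicalType) (M N : set nat) (x : nat -> T) a :
  N `<=` M -> nonthin N -> stat_conv M x a -> stat_conv N x a.
Proof.
move=> NM nN [_ h]; split => // U oU Ua.
apply: dens0_sub (h U oU Ua) => n [/NM Mn nU]; by split.
Qed.

Definition Pos := [set n : nat | (0 < n)%N].

Lemma nonthin_Pos : nonthin Pos.
Proof.
split; first split => //.
  have -> : Pos = [set: nat] `\` [set 0%N].
    apply/seteqP; split => n /=; first by case: n.
    by case: n => // -[_ /(_ erefl)].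
  exact: infinite_setD infinite_nat (finite_set1 _).
have h : dens_n Pos @ \oo --> (1:Rdefinitions.R).
  apply: cvg_near_cst; near=> n.
  have n0 : (0 < n)%N by near: n; exists 1%N.
  rewrite densE.
  have -> : cnt Pos n = n.
    rewrite /cnt (@eq_big_nat _ _ _ _ _ _ (fun _ => 1%N)).
      by rewrite sum_nat_const_nat subn1 muln1.
    by move=> i /andP[i1 _]; case: asboolP.
  by rewrite divff // pnatr_eq0 -lt0n.
by rewrite /upper_density (cvg_limn_inf_sup h).2 ltr01.
Unshelve. all: by end_near.
Qed.

Theorem mainTheorem10 (X : topologicalType) :
  stat_closed (diag_set X) ->
  forall K : set X, stat_compact_set K -> stat_closed K.
Proof.
move=> hD K hK; apply/seteqP; split; last first.
  move=> a Ka; exists Pos, (fun _ => a); split; first exact: nonthin_Pos.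
  split; first by move=> n _.
  split; first exact: nonthin_Pos.
  move=> U oU Ua; apply: (@dens0_sub _ set0).
    by move=> n [_].
  apply: cvg_dens0; apply: cvg_near_cst; apply: nearW => n.
  rewrite densE /cnt big1_seq ?mul0r // => k _; case: asboolP => //.
move=> a [M [x [nM [xK cMa]]]].
have [N [NM [nN [b [Kb cNb]]]]] := hK M x nM xK.
have cNa := @stat_conv_sub X M N x a NM nN cMa.
suff ab : a = b by rewrite ab.
have : stat_closure (diag_set X) ((a, (b:X)) : X * X).
  exists N, (fun n => ((x n, x n) : X * X)); split => //; split => //.
  split => // W oW Wab.
  have : nbhs ((a, (b:X)) : X * X) W by apply: open_nbhs_nbhs; split.
  case=> -[P Q] /= [nP nQ] PQW.
  move: nP; rewrite nbhsE => -[U [oU Ua] UP].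
  move: nQ; rewrite nbhsE => -[V [oV Vb] VQ].
  have hU := cNa.2 U oU Ua.
  have hV := cNb.2 V (open_subspaceW oV) Vb.
  have sub : [set n | N n /\ ~ W (x n, x n)] `<=`
    [set n | N n /\ ~ U (x n)] `|` [set n | N n /\ ~ V (x n)].
    move=> n [Nn nW].
  have [Uxn|nU] := pselect (U (x n)); last by left.
  have [Vxn|nV] := pselect (V (x n)); last by right.
  by exfalso; apply: nW; apply: PQW; split; [apply: UP|apply: VQ].
  exact: (dens0_sub sub (dens0_union hU hV)).
by rewrite hD.
Qed.
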